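(* Let $V$ be a real inner product space with norm $\lVert x\rVert=\sqrt{\langle x,x\rangle}$, and consider $n$ agents running the MidExtremes algorithm (described in the context) under an arbitrary communication pattern $G_1,G_2,\dots$ in which every communication graph $G_t$ is non-split, starting from arbitrary initial values $y_1(0),\dots,y_n(0)\in V$. Then for every round $t\ge 1$, \[ \Delta\big(y(t)\big)\le \sqrt{\tfrac{7}{8}}\;\Delta\big(y(t-1)\big), \] and for every $\varepsilon>0$ the convergence time satisfies $T(\varepsilon)\le \left\lceil \log_{\sqrt{8/7}} \frac{\Delta}{\varepsilon}\right\rceil$, where $\Delta=\Delta\big(y(0)\big)$ (i.e., $\Delta(y(\tau))\le\varepsilon$ for every integer $\tau\ge 0$ with $\tau\ge \lceil \log_{\sqrt{8/7}} (\Delta/\varepsilon)\rceil$). Moreover, if $V=\mathbb{R}$ (with the usual inner product), then $\Delta\big(y(t)\big)\le \tfrac12\,\Delta\big(y(t-1)\big)$ for every $t\ge1$, and $T(\varepsilon)\le \left\lceil \log_{2} \frac{\Delta}{\varepsilon}\right\rceil$.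
   Context: Dynamic network model: there are $n$ agents $1,\dots,n$ communicating in rounds $t=1,2,\dots$. In round $t$, communication is given by a directed graph $G_t$ on the vertex set $\{1,\dots,n\}$ containing every self-loop $(i,i)$; the message broadcast by $i$ in round $t$ is received by $j$ iff $(i,j)\in G_t$. A directed graph is non-split if every pair of nodes $i,j$ has a common in-neighbor $k$ (i.e., $(k,i)$ and $(k,j)$ are both edges). Each agent $i$ holds a value $y_i\in V$; $y_i(0)$ is its initial value and $y_i(t)$ its value at the end of round $t$; $y(t)=(y_1(t),\dots,y_n(t))$. MidExtremes algorithm: in round $t$ each agent $i$ broadcasts $y_i(t-1)$, lets $\mathrm{Rcv}_i(t)=\{y_j(t-1): (j,i)\in G_t\}$ be the set of received values, chooses a pair $(a,b)\in \mathrm{Rcv}_i(t)^2$ maximizing $\lVert a-b\rVert$ (ties broken arbitrarily), and sets $y_i(t)=(a+b)/2$. Notation: for $x=(x_1,\dots,x_n)\in V^n$, $\Delta(x)=\max_{i,j}\lVert x_i-x_j\rVert$. The convergence time of an execution is $T(\varepsilon)=\min\{t\ge0 : \forall \tau\ge t,\ \Delta(y(\tau))\le\varepsilon\}$. *)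

(* Defs.v *)
From HB Require Import structures.
From mathcomp Require Import all_boot all_order all_algebra.
From mathcomp Require Import all_classical all_reals all_analysis.
Set Implicit Arguments. Unset Strict Implicit. Unset Printing Implicit Defensive.
Import Order.TTheory GRing.Theory Num.Theory.
Local Open Scope ring_scope.

Definition inner_product (R : realType) (V : lmodType R) (ip : V -> V -> R) : Prop :=
  [/\ (forall x y : V, ip x y = ip y x),
      (forall (a : R) (x y z : V), ip (a *: x + y) z = a * ip x z + ip y z),
      (forall x : V, 0 <= ip x x) &
      (forall x : V, ip x x = 0 -> x = 0)].

Definition ipnorm (R : realType) (V : lmodType R) (ip : V -> V -> R) (x : V) : R :=
  Num.sqrt (ip x x).

(* A communication graph on agents 'I_n is a relation G (G j i = edge (j,i)). *)
Definition has_self_loops (n : nat) (G : rel 'I_n) : Prop := forall i, G i i.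

Definition non_split (n : nat) (G : rel 'I_n) : Prop :=
  forall i j : 'I_n, exists k : 'I_n, G k i /\ G k j.

Definition diam (R : realType) (V : lmodType R) (nrm : V -> R) (n : nat)
  (x : 'I_n -> V) : R :=
  \big[Num.max/0]_(i < n) \big[Num.max/0]_(j < n) nrm (x i - x j).

Definition midextremes_round (R : realType) (V : lmodType R) (nrm : V -> R)
  (n : nat) (G : rel 'I_n) (yprev ynext : 'I_n -> V) : Prop :=
  forall i : 'I_n, exists j k : 'I_n,
    [/\ G j i, G k i,
        (forall j' k' : 'I_n, G j' i -> G k' i ->
           nrm (yprev j' - yprev k') <= nrm (yprev j - yprev k)) &
        ynext i = (2 : R)^-1 *: (yprev j + yprev k)].

(* An execution: round t >= 1 uses graph G t and maps y (t-1) to y t.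
   (G 0 is unused.) *)
Definition midextremes_exec (R : realType) (V : lmodType R) (nrm : V -> R)
  (n : nat) (G : nat -> rel 'I_n) (y : nat -> 'I_n -> V) : Prop :=
  forall t : nat, midextremes_round nrm (G t.+1) (y t) (y t.+1).

Definition nonsplit_pattern (n : nat) (G : nat -> rel 'I_n) : Prop :=
  forall t : nat, has_self_loops (G t.+1) /\ non_split (G t.+1).

Definition logb (R : realType) (b x : R) : R := ln x / ln b.

(* Main.v *)
Require Import Defs.
From HB Require Import structures.
From mathcomp Require Import all_boot all_order all_algebra.
From mathcomp Require Import all_classical all_reals all_analysis.
From mathcomp Require Import ring lra.
Import Order.TTheory GRing.Theory Num.Theory.
Set Implicit Arguments. Unset Strict Implicit. Unset Printing Implicit Defensive.
Local Open Scope ring_scope.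

Lemma diam_ge0 (R : realType) (V : lmodType R) (nrm : V -> R) n (x : 'I_n -> V) :
  0 <= diam nrm x.
Proof.
rewrite /diam; elim/big_rec: _ => // i m _ H.
by rewrite le_max H orbT.
Qed.

Lemma le_diam (R : realType) (V : lmodType R) (nrm : V -> R) n (x : 'I_n -> V) i j :
  nrm (x i - x j) <= diam nrm x.
Proof.
rewrite /diam.
apply: le_trans (le_bigmax _ (fun i => \big[Num.max/0]_(j < n) nrm (x i - x j)) i).
exact: (le_bigmax _ (fun j => nrm (x i - x j)) j).
Qed.

Lemma diam_le (R : realType) (V : lmodType R) (nrm : V -> R) n (x : 'I_n -> V) M :
  0 <= M -> (forall i j, nrm (x i - x j) <= M) -> diam nrm x <= M.
Proof.
move=> M0 H; rewrite /diam; apply: bigmax_le => // i _.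
by apply: bigmax_le => // j _.
Qed.

Lemma round_contract (R : realType) (V : lmodType R) (nrm : V -> R) (c : R)
  n (G : rel 'I_n) yp yn :
  0 <= c ->
  (forall a b c' d z D, 0 <= D ->
     nrm (a - c') <= D -> nrm (a - d) <= D -> nrm (b - c') <= D -> nrm (b - d) <= D ->
     nrm (z - a) <= nrm (a - b) -> nrm (z - b) <= nrm (a - b) ->
     nrm (z - c') <= nrm (c' - d) -> nrm (z - d) <= nrm (c' - d) ->
     nrm ((2:R)^-1 *: (a + b) - (2:R)^-1 *: (c' + d)) <= c * D) ->
  non_split G -> midextremes_round nrm G yp yn ->
  diam nrm yn <= c * diam nrm yp.
Proof.
move=> c0 key ns rd.
apply: diam_le; first by apply: mulr_ge0 => //; apply: diam_ge0.
move=> i i'.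
have [j [k [Gj Gk Hm ->]]] := rd i.
have [j2 [k2 [Gj2 Gk2 Hm2 ->]]] := rd i'.
have [z [Gzi Gzi']] := ns i i'.
apply: (key _ _ _ _ (yp z)); rewrite ?diam_ge0 ?le_diam //.
- exact: Hm.
- exact: Hm.
- exact: Hm2.
- exact: Hm2.
Qed.

Lemma iter_contract (R : realType) (V : lmodType R) (nrm : V -> R) n (y : nat -> 'I_n -> V) (c : R) :
  0 <= c -> (forall t, diam nrm (y t.+1) <= c * diam nrm (y t)) ->
  forall t, diam nrm (y t) <= c ^+ t * diam nrm (y 0%N).
Proof.
move=> c0 H; elim=> [|t IH]; first by rewrite expr0 mul1r.
apply: le_trans (H t) _; rewrite exprS -mulrA; exact: ler_wpM2l.
Qed.

Lemma conv_general (R : realType) (V : lmodType R) (nrm : V -> R) n (y : nat -> 'I_n -> V) (c b : R) :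
  0 <= c -> 1 < b -> c * b = 1 -> (forall t, diam nrm (y t.+1) <= c * diam nrm (y t)) ->
  forall eps : R, 0 < eps ->
  forall tau : nat,
    (0 < diam nrm (y 0%N) -> Num.ceil (logb b (diam nrm (y 0%N) / eps)) <= tau%:Z) ->
    diam nrm (y tau) <= eps.
Proof.
move=> c0 b1 cb H eps e0 tau Ht.
apply: le_trans; first exact: (iter_contract c0 H tau).
have := diam_ge0 nrm (y 0%N); rewrite le_eqVlt => /orP [/eqP <-|D0].
  by rewrite mulr0 ltW.
have := Ht D0; rewrite ceil_le_int /logb ler_pdivrMr ?ln_gt0 //.
have b0 : 0 < b by lra.
have Dp : 0 < diam nrm (y 0%N) / eps by apply: divr_gt0.
rewrite -[(tau%:~R : R)]/(tau%:R : R) mulr_natl -lnXn // ler_ln ?posrE ?exprn_gt0 //.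
rewrite ler_pdivrMr // => Hle.
have cb' : c ^+ tau * b ^+ tau = 1 by rewrite -exprMn cb expr1n.
have ct0 : 0 <= c ^+ tau by apply: exprn_ge0.
have := ler_wpM2l ct0 Hle.
by rewrite mulrA cb' mul1r.
Qed.
Lemma ipS (R : realType) (V : lmodType R) (ip : V -> V -> R) (Hip : inner_product ip) x y : ip x y = ip y x. Proof. by case: Hip. Qed.
Lemma ipL (R : realType) (V : lmodType R) (ip : V -> V -> R) (Hip : inner_product ip) a x y z : ip (a *: x + y) z = a * ip x z + ip y z. Proof. by case: Hip. Qed.
Lemma ip0l (R : realType) (V : lmodType R) (ip : V -> V -> R) (Hip : inner_product ip) z : ip 0 z = 0.
Proof. have := (ipL Hip) 1 0 0 z; rewrite scale1r addr0 => H; lra. Qed.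
Lemma ipDl (R : realType) (V : lmodType R) (ip : V -> V -> R) (Hip : inner_product ip) x y z : ip (x + y) z = ip x z + ip y z.
Proof. by rewrite -[x]scale1r (ipL Hip) mul1r scale1r. Qed.
Lemma ipZl (R : realType) (V : lmodType R) (ip : V -> V -> R) (Hip : inner_product ip) a x z : ip (a *: x) z = a * ip x z.
Proof. by rewrite -[a *: x]addr0 (ipL Hip) (ip0l Hip) addr0. Qed.
Lemma ipNl (R : realType) (V : lmodType R) (ip : V -> V -> R) (Hip : inner_product ip) x z : ip (- x) z = - ip x z.
Proof. by rewrite -scaleN1r (ipZl Hip) mulN1r. Qed.
Lemma ipDr (R : realType) (V : lmodType R) (ip : V -> V -> R) (Hip : inner_product ip) x y z : ip z (x + y) = ip z x + ip z y.
Proof. by rewrite (ipS Hip) (ipDl Hip) (ipS Hip) ((ipS Hip) y). Qed.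
Lemma ipZr (R : realType) (V : lmodType R) (ip : V -> V -> R) (Hip : inner_product ip) a x z : ip z (a *: x) = a * ip z x.
Proof. by rewrite (ipS Hip) (ipZl Hip) (ipS Hip). Qed.
Lemma ipNr (R : realType) (V : lmodType R) (ip : V -> V -> R) (Hip : inner_product ip) x z : ip z (- x) = - ip z x.
Proof. by rewrite (ipS Hip) (ipNl Hip) (ipS Hip). Qed.
Lemma ip_ge0 (R : realType) (V : lmodType R) (ip : V -> V -> R) (Hip : inner_product ip) x : 0 <= ip x x. Proof. by case: Hip. Qed.

Lemma key_ip (R : realType) (V : lmodType R) (ip : V -> V -> R) (Hip : inner_product ip) (a b c d z : V) (D : R) : 0 <= D ->
  ipnorm ip (a - c) <= D -> ipnorm ip (a - d) <= D -> ipnorm ip (b - c) <= D -> ipnorm ip (b - d) <= D ->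
  ipnorm ip (z - a) <= ipnorm ip (a - b) -> ipnorm ip (z - b) <= ipnorm ip (a - b) ->
  ipnorm ip (z - c) <= ipnorm ip (c - d) -> ipnorm ip (z - d) <= ipnorm ip (c - d) ->
  ipnorm ip ((2:R)^-1 *: (a + b) - (2:R)^-1 *: (c + d)) <= Num.sqrt (7 / 8 : R) * D.
Proof.
move=> D0; rewrite /ipnorm.
have sD : D = Num.sqrt (D ^+ 2) by rewrite sqrtr_sqr ger0_norm.
rewrite sD -sqrtrM; last lra.
rewrite !ler_sqrt ?(ip_ge0 Hip) ?mulr_ge0 ?sqr_ge0 //; try lra.
have P := (ip_ge0 Hip) (a + b + c + d - z - z - z - z).
move: P.
rewrite !((ipDl Hip), (ipDr Hip), (ipNl Hip), (ipNr Hip), (ipZl Hip), (ipZr Hip)).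
have s1 := (ipS Hip) a b. have s2 := (ipS Hip) a c. have s3 := (ipS Hip) a d. have s4 := (ipS Hip) a z.
have s5 := (ipS Hip) b c. have s6 := (ipS Hip) b d. have s7 := (ipS Hip) b z.
have s8 := (ipS Hip) c d. have s9 := (ipS Hip) c z. have s10 := (ipS Hip) d z.
move=> *. nra.
Qed.
Lemma ipnormR (R : realType) (x : R^o) : ipnorm (fun a b : R^o => a * b) x = `|x|.
Proof. by rewrite /ipnorm -expr2 sqrtr_sqr. Qed.

Lemma key_R (R : realType) (a b c d z : R^o) (D : R) : 0 <= D ->
  `|a - c| <= D -> `|a - d| <= D -> `|b - c| <= D -> `|b - d| <= D ->
  `|z - a| <= `|a - b| -> `|z - b| <= `|a - b| ->
  `|z - c| <= `|c - d| -> `|z - d| <= `|c - d| ->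
  `|(2:R)^-1 *: (a + b) - (2:R)^-1 *: (c + d)| <= 2^-1 * D.
Proof.
move=> D0.
rewrite -[(2:R)^-1 *: (a + b)]/((2:R)^-1 * (a + b)) -[(2:R)^-1 *: (c + d)]/((2:R)^-1 * (c + d)).
have [h|h] := lerP 0 (a - b); [rewrite (ger0_norm h) | rewrite (ltr0_norm h)];
have [h'|h'] := lerP 0 (c - d); (rewrite ?(ger0_norm h') ?(ltr0_norm h'));
rewrite !ler_norml => /andP[? ?] /andP[? ?] /andP[? ?] /andP[? ?]
  /andP[? ?] /andP[? ?] /andP[? ?] /andP[? ?]; apply/andP; split; lra.
Qed.
Theorem theorem1 :
  (forall (R : realType) (V : lmodType R) (ip : V -> V -> R),
     inner_product ip ->
     forall (n : nat) (G : nat -> rel 'I_n) (y : nat -> 'I_n -> V),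
       nonsplit_pattern G ->
       midextremes_exec (ipnorm ip) G y ->
       (forall t : nat,
          diam (ipnorm ip) (y t.+1) <= Num.sqrt (7 / 8 : R) * diam (ipnorm ip) (y t))
       /\
       (forall eps : R, 0 < eps ->
          forall tau : nat,
            (0 < diam (ipnorm ip) (y 0%N) ->
               Num.ceil (logb (Num.sqrt (8 / 7 : R)) (diam (ipnorm ip) (y 0%N) / eps))
                 <= tau%:Z) ->
            diam (ipnorm ip) (y tau) <= eps))
  /\
  (forall (R : realType) (n : nat) (G : nat -> rel 'I_n) (y : nat -> 'I_n -> R^o),
     nonsplit_pattern G ->
     midextremes_exec (ipnorm (fun a b : R^o => a * b)) G y ->
     (forall t : nat,
        diam (ipnorm (fun a b : R^o => a * b)) (y t.+1)
          <= 2^-1 * diam (ipnorm (fun a b : R^o => a * b)) (y t))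
     /\
     (forall eps : R, 0 < eps ->
        forall tau : nat,
          (0 < diam (ipnorm (fun a b : R^o => a * b)) (y 0%N) ->
             Num.ceil (logb 2 (diam (ipnorm (fun a b : R^o => a * b)) (y 0%N) / eps))
               <= tau%:Z) ->
          diam (ipnorm (fun a b : R^o => a * b)) (y tau) <= eps)).
Proof.
split.
  move=> R V ip Hip n G y NS EX.
  have c0 : 0 <= Num.sqrt (7 / 8 : R) by apply: sqrtr_ge0.
  have H : forall t, diam (ipnorm ip) (y t.+1) <= Num.sqrt (7 / 8 : R) * diam (ipnorm ip) (y t).
    move=> t; apply: round_contract => //.
    - move=> a b c' d z D D0; exact: key_ip.
    - by case: (NS t).
  split => //.
  apply: conv_general c0 _ _ H.
  - rewrite -{1}(sqrtr1 R) ltr_sqrt; lra.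
  - rewrite -sqrtrM; last lra.
    have -> : (7/8 * (8/7) : R) = 1 by field.
    exact: sqrtr1.
move=> R n G y NS EX.
have e : ipnorm (fun a b : R^o => a * b) = (fun x : R^o => `|x|).
  by apply: funext => x; apply: ipnormR.
rewrite e in EX *.
have c0 : 0 <= (2^-1 : R) by lra.
have H : forall t, diam (fun x : R^o => `|x|) (y t.+1) <= 2^-1 * diam (fun x : R^o => `|x|) (y t).
  move=> t; apply: round_contract => //.
  - move=> a b c' d z D D0; exact: key_R.
  - by case: (NS t).
split => //.
apply: conv_general c0 _ _ H; lra.
Qed.
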